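(* Let $X$ be a set; give $2^X$ the product topology and $X$ the discrete topology. Then: (i) $\tau_{pp}$ is the smallest topology on $I(X)$ for which $\mathrm{dom}:I(X)\to 2^X$, $\mathrm{im}:I(X)\to 2^X$ and, for every $x\in X$, $\mathrm{ev}_x:D_x\to X$ (with $D_x$ carrying the subspace topology) are continuous; (ii) $\mathrm{dom}$ and $\mathrm{im}$ are open maps from $(I(X),\tau_{pp})$ to $2^X$; (iii) for any topological space $Y$ and any map $\varphi:Y\to(I(X),\tau_{pp})$, $\varphi$ is continuous if and only if $\mathrm{dom}\circ\varphi$ and $\mathrm{im}\circ\varphi$ are continuous and, for every $x\in X$, $\mathrm{ev}_x\circ\varphi$ is continuous on $\varphi^{-1}(D_x)$; (iv) the set of idempotents $\{1_A: A\subseteq X\}$ is $\tau_{pp}$-compact.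
   Context: $I(X)$ is the set of all bijections $f:A\to B$ with $A,B\subseteq X$ (including the empty map), $\mathrm{dom}(f)=A$, $\mathrm{im}(f)=B$. The maps $\mathrm{dom},\mathrm{im}:I(X)\to 2^X$ send $f$ to $\mathrm{dom}(f)$ and $\mathrm{im}(f)$. $D_x=\{f\in I(X): x\in\mathrm{dom}(f)\}$ and $\mathrm{ev}_x:D_x\to X$, $f\mapsto f(x)$. $1_A$ is the identity on $A$. For $x,y\in X$: $v(x,y)=\{f: x\in\mathrm{dom}(f), f(x)=y\}$, $w_1(x)=\{f: x\notin\mathrm{dom}(f)\}$, $w_2(y)=\{f: y\notin\mathrm{im}(f)\}$; $\tau_{pp}$ is the topology generated by the subbasis of all these sets. *)

(* Defs.v *)
From HB Require Import structures.
From mathcomp Require Import all_boot all_order all_algebra.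
From mathcomp Require Import all_classical all_reals all_analysis.
Set Implicit Arguments. Unset Strict Implicit. Unset Printing Implicit Defensive.
Local Open Scope classical_set_scope.

(* I(X): bijections f : A -> B with A, B subsets of X, represented as
   partial injections X -> option X (dom f = {x | f x <> None},
   im f = {y | exists x, f x = Some y}). *)
Record pinj (X : Type) := PInj {
  pfun : X -> option X ;
  pfun_inj : forall x y z, pfun x = Some z -> pfun y = Some z -> x = y }.

HB.instance Definition _ (X : Type) := gen_eqMixin (pinj X).
HB.instance Definition _ (X : Type) := gen_choiceMixin (pinj X).

Section PP.
Variable X : Type.

(* subsets of X as elements of 2^X = {ptws X -> bool} (product topology, bool discrete) *)
Definition dom (f : pinj X) : {ptws X -> bool} := fun x => isSome (pfun f x).
Definition im (f : pinj X) : {ptws X -> bool} :=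
  fun y => `[< exists x, pfun f x = Some y >].

Definition D (x : X) : set (pinj X) := [set f | pfun f x <> None].

(* ev_x : D_x -> X, extended arbitrarily (by x) outside D_x *)
Definition ev (x : X) (f : pinj X) : X := odflt x (pfun f x).

Definition v (x y : X) : set (pinj X) := [set f | pfun f x = Some y].
Definition w1 (x : X) : set (pinj X) := [set f | pfun f x = None].
Definition w2 (y : X) : set (pinj X) := [set f | ~ (exists x, pfun f x = Some y)].

Definition subbase_pp : set (set (pinj X)) :=
  [set S | (exists x y, S = v x y) \/ (exists x, S = w1 x) \/ (exists y, S = w2 y)].

Lemma idA_inj (A : set X) : forall x y z,
  (if `[< A x >] then Some x else None) = Some z ->
  (if `[< A y >] then Some y else None) = Some z -> x = y.
Proof.
move=> x y z; case: `[< A x >] => //; case: `[< A y >] => // [[->] [->]] //.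
Qed.

Definition idA (A : set X) : pinj X :=
  @PInj X (fun x => if `[< A x >] then Some x else None) (@idA_inj A).

End PP.

Definition Ipp (X : Type) := pinj X.
Section PPtop.
Variable X : Type.
HB.instance Definition _ := Choice.on (Ipp X).
HB.instance Definition _ :=
  isSubBaseTopological.Build (Ipp X) (subbase_pp (X:=X)) id.
End PPtop.

Definition is_topology (T : Type) (O : set_system T) : Prop :=
  [/\ O setT,
      (forall A B, O A -> O B -> O (A `&` B)) &
      (forall (I : Type) (F : I -> set T), (forall i, O (F i)) -> O (\bigcup_i F i))].

(* Continuity of dom, im : (I(X), O) -> 2^X (product topology on X -> bool,
   bool discrete) and of ev_x : D_x -> X (D_x with the subspace topology of O,
   X discrete). *)
Definition pp_maps_continuous (X : choiceType) (O : set_system (pinj X)) : Prop :=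
  [/\ (forall V : set {ptws X -> bool}, open V -> O (dom (X:=X) @^-1` V)),
      (forall V : set {ptws X -> bool}, open V -> O (im (X:=X) @^-1` V)) &
      (forall (x : X) (V : set (discrete_topology X)), open V ->
         exists U, O U /\ U `&` D x = D x `&` (ev x @^-1` V))].

(* Main.v *)
Require Import Defs.
From HB Require Import structures.
From mathcomp Require Import all_boot all_order all_algebra.
From mathcomp Require Import all_classical all_reals all_analysis.
From mathcomp Require Import finmap zify.
Local Open Scope classical_set_scope.

Set Implicit Arguments. Unset Strict Implicit.


Section Helpers.
Variable X : choiceType.

Lemma Ipp_openE : @open (Ipp X) = [set \bigcup_(i in D') i | D' in subset^~ (finI_from (subbase_pp (X:=X)) id)].
Proof. reflexivity. Qed.

Lemma subbase_open (s : set (pinj X)) : subbase_pp s -> @open (Ipp X) s.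
Proof.
move=> Hs; rewrite Ipp_openE /=; exists [set s]; last by rewrite bigcup_set1.
by move=> _ ->; exact: finI_from1.
Qed.

Lemma bigcap_seq_nil : \bigcap_(s in [set x | x \in ([::] : seq (set (pinj X)))]) s = setT.
Proof. by apply/seteqP; split => t // _ s /=; rewrite in_nil. Qed.

Lemma bigcap_seq_cons (a : set (pinj X)) L :
  \bigcap_(s in [set x | x \in a :: L]) s = a `&` \bigcap_(s in [set x | x \in L]) s.
Proof.
apply/seteqP; split => t.
  move=> Ht; split; first by apply: Ht; rewrite /= mem_head.
  by move=> s sL; apply: Ht; rewrite /= in_cons sL orbT.
by move=> [at0 Lt] s /=; rewrite in_cons => /orP[/eqP->|/Lt].
Qed.

Lemma gen_top (O : set_system (pinj X)) : is_topology O ->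
  (forall s, subbase_pp s -> O s) -> forall U, @open (Ipp X) U -> O U.
Proof.
case=> OT OI OU Hs U; rewrite Ipp_openE => -[D' sD' <-].
have -> : \bigcup_(i in D') i = \bigcup_(j : {i | D' i}) sval j.
  apply/seteqP; split => t; first by case=> i Di it; exists (exist _ i Di).
  by case=> -[i Di] _ it; exists i.
apply: OU => -[i Di] /=; have [S SS <-] := sD' i Di.
have key : forall L : seq (set (pinj X)), (forall s, s \in L -> subbase_pp s) ->
    O (\bigcap_(s in [set x | x \in L]) s).
  elim => [|a L IH] HL; first by rewrite bigcap_seq_nil.
  rewrite bigcap_seq_cons; apply: OI; first by apply: Hs; apply: HL; exact: mem_head.
  by apply: IH => s sL; apply: HL; rewrite in_cons sL orbT.
apply: (key S) => s sS; have := SS s sS; by rewrite in_setE.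
Qed.

Definition Bas (P : seq (X * X)) (As Bs : seq X) : set (pinj X) :=
  [set g | [/\ (forall p, p \in P -> pfun g p.1 = Some p.2),
     (forall a, a \in As -> pfun g a = None) &
     (forall b, b \in Bs -> forall x, pfun g x <> Some b)]].

Lemma open_Bas (U : set (Ipp X)) (f : pinj X) : open U -> U f ->
  exists P As Bs, Bas P As Bs f /\ Bas P As Bs `<=` U.
Proof.
rewrite Ipp_openE => -[D' sD' <-] [i Di ift].
have [S SS eqi] := sD' i Di.
have key : forall L : seq (set (pinj X)), (forall s, s \in L -> subbase_pp s) ->
    (forall s, s \in L -> s f) ->
    exists P As Bs, Bas P As Bs f /\ Bas P As Bs `<=` \bigcap_(s in [set x | x \in L]) s.
  elim => [|a L IH] HL Hf.
    exists [::], [::], [::]; split; first by split => ?; rewrite in_nil.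
    by rewrite bigcap_seq_nil.
  have HL' : forall s, s \in L -> subbase_pp s.
    by move=> s sL; apply: HL; rewrite in_cons sL orbT.
  have Hf' : forall s, s \in L -> s f.
    by move=> s sL; apply: Hf; rewrite in_cons sL orbT.
  have [P [As [Bs [HB Hsub]]]] := IH HL' Hf'.
  have af := Hf a (mem_head _ _).
  rewrite bigcap_seq_cons.
  case: (HL a (mem_head _ _)) => [[x [y Ea]]|[[x Ea]|[y Ea]]]; rewrite {}Ea in af *.
  - exists ((x, y) :: P), As, Bs; case: HB => HP HA HBs; split.
      by rewrite /Bas/=; split => // p; rewrite in_cons => /orP[/eqP->|/HP].
    move=> g [gP gA gB]; split; first by apply: (gP (x, y)); exact: mem_head.
    by apply: Hsub; rewrite /Bas/=; split => // p pP; apply: gP; rewrite in_cons pP orbT.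
  - exists P, (x :: As), Bs; case: HB => HP HA HBs; split.
      by rewrite /Bas/=; split => // p; rewrite in_cons => /orP[/eqP->|/HA].
    move=> g [gP gA gB]; split; first by apply: gA; exact: mem_head.
    by apply: Hsub; rewrite /Bas/=; split => // p pP; apply: gA; rewrite in_cons pP orbT.
  - exists P, As, (y :: Bs); case: HB => HP HA HBs; split.
      rewrite /Bas/=; split => // b; rewrite in_cons => /orP[/eqP-> x fx|/HBs //].
      by apply: af; exists x.
    move=> g [gP gA gB]; split; first by move=> [x gx]; exact: (gB y (mem_head _ _) x gx).
    by apply: Hsub; rewrite /Bas/=; split => // p pP; apply: gB; rewrite in_cons pP orbT.
have SS' : forall s, s \in (S : seq _) -> subbase_pp s.
  by move=> s sS; have := SS s sS; rewrite in_setE.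
have Sf : forall s, s \in (S : seq _) -> s f.
  by move=> s sS; move: ift; rewrite -eqi; apply.
have [P [As [Bs [HB Hsub]]]] := key S SS' Sf.
exists P, As, Bs; split => // g /Hsub Hg; exists i => //; rewrite -eqi; exact: Hg.
Qed.

End Helpers.


Section Helpers2.
Variable X : choiceType.

Definition cyl (A : X -> bool) (F : seq X) : set {ptws X -> bool} :=
  [set g | forall x, x \in F -> g x = A x].

Lemma coord_continuous (x : X) : continuous (fun g : {ptws X -> bool} => g x).
Proof.
move=> g; have := @pointwise_cvgP (discrete_topology X) bool (nbhs g) g _.
move=> /(_ _) [+ _]; apply; exact: cvg_id.
Qed.

Lemma open_coord (x : X) (b : bool) : open [set g : {ptws X -> bool} | g x = b].
Proof.
have /continuousP H := @coord_continuous x.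
exact: (H [set b] (discrete_open _)).
Qed.

Lemma open_cyl A F : open (cyl A F).
Proof.
elim: F => [|x F IH].
  have -> : cyl A [::] = setT by apply/seteqP; split => g // _ y; rewrite in_nil.
  exact: openT.
have -> : cyl A (x :: F) = [set g | g x = A x] `&` cyl A F.
  apply/seteqP; split => g.
    move=> H; split; first by apply: H; exact: mem_head.
    by move=> y yF; apply: H; rewrite in_cons yF orbT.
  by move=> [gx gF] y; rewrite in_cons => /orP[/eqP->|/gF].
exact: openI (open_coord _ _) IH.
Qed.

Section Avoid.
Variable T : seq X.
Variable fr : seq X -> X.
Hypothesis frP : forall l, fr l \notin l.

Fixpoint E n := if n is n'.+1 then rcons (E n') (fr (T ++ E n')) else [::].
Definition e n := fr (T ++ E n).

Lemma e_notT n : e n \notin T.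
Proof. by have := frP (T ++ E n); rewrite mem_cat negb_or => /andP[]. Qed.

Lemma e_notE n : e n \notin E n.
Proof. by have := frP (T ++ E n); rewrite mem_cat negb_or => /andP[]. Qed.

Lemma e_in m n : (m < n)%N -> e m \in E n.
Proof.
elim: n => // n IH; rewrite ltnS leq_eqVlt => /orP[/eqP->|/IH H].
  by rewrite /= mem_rcons mem_head.
by rewrite /= mem_rcons in_cons H orbT.
Qed.

Lemma e_inj : injective e.
Proof.
move=> m n emn; case: (ltngtP m n) => // H.
  by have := e_notE n; rewrite -emn e_in.
by have := e_notE m; rewrite emn e_in.
Qed.

Definition h z := if z \in T then e (2 * index z T).+1
  else if pselect (exists n, e n == z) is left H then e (2 * xchoose H) else z.

Lemma h_notT z : h z \notin T.
Proof.
rewrite /h; case: ifP => zT; first exact: e_notT.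
by case: pselect => [H|H]; [exact: e_notT|rewrite zT].
Qed.

Lemma h_inj : injective h.
Proof.
move=> z1 z2; rewrite /h.
case: ifP => T1; case: ifP => T2.
- move/e_inj => Hi; have Hi' : index z1 T = index z2 T by lia.
  by rewrite -(nth_index z1 T1) -(nth_index z1 T2) Hi'.
- case: pselect => [H|H]; first by move/e_inj; lia.
  by move=> Hz; exfalso; apply: H; exists (2 * index z1 T).+1; rewrite Hz.
- case: pselect => [H|H]; first by move/e_inj; lia.
  by move=> Hz; exfalso; apply: H; exists (2 * index z2 T).+1; rewrite -Hz.
- case: (pselect (exists n, e n == z1)) => [H1|H1];
  case: (pselect (exists n, e n == z2)) => [H2|H2].
  + move/e_inj => Hi; have Hi' : xchoose H1 = xchoose H2 by lia.
    by rewrite -(eqP (xchooseP H1)) -(eqP (xchooseP H2)) Hi'.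
  + by move=> Hz; exfalso; apply: H2; exists (2 * xchoose H1); rewrite Hz.
  + by move=> Hz; exfalso; apply: H1; exists (2 * xchoose H2); rewrite -Hz.
  + by [].
Qed.
End Avoid.

Lemma inj_avoid (T : seq X) : (forall l : seq X, exists x, x \notin l) ->
  exists h : X -> X, injective h /\ forall z, h z \notin T.
Proof.
move=> Hinf.
pose fr := fun l => xchoose (Hinf l).
have frP : forall l, fr l \notin l by move=> l; exact: (xchooseP (Hinf l)).
by exists (h T fr); split; [exact: h_inj|exact: h_notT].
Qed.

End Helpers2.


Section Helpers3.
Variable X : choiceType.

Definition pinv_fun (f : pinj X) (y : X) : option X :=
  if pselect (exists x, pfun f x == Some y) is left H then Some (xchoose H) else None.

Lemma pinv_funP f y x : pinv_fun f y = Some x <-> pfun f x = Some y.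
Proof.
rewrite /pinv_fun; case: pselect => [H|H]; split => //.
- by move=> [<-]; exact/eqP/(xchooseP H).
- move=> fx; congr Some; apply: (pfun_inj (eqP (xchooseP H)) fx).
- by move=> fx; exfalso; apply: H; exists x; rewrite fx.
Qed.

Lemma pinv_inj f : forall y1 y2 z, pinv_fun f y1 = Some z -> pinv_fun f y2 = Some z -> y1 = y2.
Proof.
by move=> y1 y2 z /pinv_funP H1 /pinv_funP; rewrite H1 => -[].
Qed.

Definition pinvj (f : pinj X) : pinj X := @PInj X (pinv_fun f) (@pinv_inj f).

Lemma dom_pinv f : dom (pinvj f) = im f.
Proof.
apply/funext => y; rewrite /dom /im /=.
case E: (pinv_fun f y) => [x|] /=.
  by apply/esym/asboolT; exists x; exact/pinv_funP.
by apply/esym/asboolF => -[x /pinv_funP]; rewrite E.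
Qed.

Lemma im_pinv f : im (pinvj f) = dom f.
Proof.
apply/funext => x; rewrite /dom /im /=.
case E: (pfun f x) => [y|] /=.
  by apply/asboolT; exists y; exact/pinv_funP.
by apply/asboolF => -[y /pinv_funP]; rewrite E.
Qed.

Definition swp (P : seq (X * X)) := map (fun p : X * X => (p.2, p.1)) P.

Lemma swpK P : swp (swp P) = P.
Proof. by rewrite /swp -map_comp map_id_in // => -[]. Qed.

Lemma Bas_pinvj (P : seq (X * X)) (As Bs : seq X) (f : pinj X) : Bas P As Bs f -> Bas (swp P) Bs As (pinvj f).
Proof.
case=> HP HA HB; split.
- move=> p /mapP [q qP ->] /=; apply/pinv_funP; exact: HP.
- move=> b bB /=; case E: (pinv_fun f b) => [x|] //.
  by move/pinv_funP: E => /(HB b bB).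
- move=> a aA y /= /pinv_funP; by rewrite HA.
Qed.

Lemma fstP (P : seq (X * X)) (As Bs : seq X) (f : pinj X) (x z : X) : Bas P As Bs f -> x \in map fst P -> pfun f x = Some z ->
  z \in map snd P.
Proof.
case=> HP _ _ /mapP [p pP ->]; rewrite HP // => -[<-]; exact: map_f.
Qed.

Arguments fstP {P As Bs f x z}.

Lemma fst_dom (P : seq (X * X)) (As Bs : seq X) (f : pinj X) (x : X) : Bas P As Bs f -> x \in map fst P -> pfun f x <> None.
Proof. by case=> HP _ _ /mapP [p pP ->]; rewrite HP. Qed.

Arguments fst_dom {P As Bs f x}.

Section Fill.
Variables (P : seq (X * X)) (As Bs : seq X) (f : pinj X) (A' : X -> bool) (h : X -> X).
Hypotheses (hinj : injective h) (hT : forall z, h z \notin map snd P ++ Bs)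
  (Hf : Bas P As Bs f) (HA' : forall x, x \in map fst P ++ As -> A' x = dom f x).

Definition gfun x := if A' x then (if x \in map fst P then pfun f x else Some (h x)) else None.

Lemma gfun_inj : forall x1 x2 z, gfun x1 = Some z -> gfun x2 = Some z -> x1 = x2.
Proof.
move=> x1 x2 z; rewrite /gfun; case: (A' x1) => //; case: (A' x2) => //.
case: ifP => H1; case: ifP => H2.
- exact: pfun_inj.
- move=> fx1 [hz]; have := hT x2; rewrite mem_cat hz (fstP Hf H1 fx1) //.
- move=> [hz] fx2; have := hT x1; rewrite mem_cat hz (fstP Hf H2 fx2) //.
- by move=> [<-] [] /hinj.
Qed.

Definition gfill : pinj X := @PInj X gfun gfun_inj.

Lemma gfill_Bas : Bas P As Bs gfill.
Proof.
case: (Hf) => HP HA HB; split.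
- move=> p pP /=; rewrite /gfun.
  have p1 : p.1 \in map fst P by exact: map_f.
  by rewrite HA' ?mem_cat ?p1 // /dom HP.
- move=> a aA /=; rewrite /gfun HA' ?mem_cat ?aA ?orbT // /dom HA //.
- move=> b bB x /=; rewrite /gfun; case: (A' x) => //; case: ifP => H.
    exact: HB.
  move=> [hb]; have := hT x; by rewrite mem_cat hb bB orbT.
Qed.

Lemma gfill_dom : dom gfill = A'.
Proof.
apply/funext => x; rewrite /dom /= /gfun; case E: (A' x) => //.
case: ifP => H //; by case F: (pfun f x) => //; exfalso; exact: (fst_dom Hf H F).
Qed.
End Fill.

Lemma dom_fill (P : seq (X * X)) (As Bs : seq X) (f : pinj X) (A' : X -> bool) (h : X -> X) : injective h ->
  (forall z, h z \notin map snd P ++ Bs) -> Bas P As Bs f ->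
  (forall x, x \in map fst P ++ As -> A' x = dom f x) ->
  exists g, Bas P As Bs g /\ dom g = A'.
Proof.
move=> hinj hT Hf HA'; exists (@gfill P As Bs f A' h hinj hT Hf).
split; first exact: (@gfill_Bas P As Bs f A' h hinj hT Hf HA').
exact: gfill_dom.
Qed.

End Helpers3.


Section Helpers4.
Variable X : choiceType.

Lemma infinite_of (Hinf : ~ exists l : seq X, forall x, x \in l) :
  forall l : seq X, exists x, x \notin l.
Proof.
move=> l; apply: contrapT => H; apply: Hinf; exists l => x.
by apply/negPn/negP => xl; apply: H; exists x.
Qed.

Lemma cyl_nbhs (A : {ptws X -> bool}) (V : set {ptws X -> bool}) (F : seq X) :
  cyl A F `<=` V -> nbhs A V.
Proof.
move=> H; apply: (filterS H); apply: open_nbhs_nbhs; split; first exact: open_cyl.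
by move=> x.
Qed.

Lemma map_fst_swp (P : seq (X * X)) : map fst (swp P) = map snd P.
Proof. by rewrite /swp -map_comp. Qed.

Lemma map_snd_swp (P : seq (X * X)) : map snd (swp P) = map fst P.
Proof. by rewrite /swp -map_comp. Qed.

Lemma dom_open (U : set (Ipp X)) : open U -> open (dom (X:=X) @` U).
Proof.
move=> oU; rewrite openE => _ [f Uf <-].
have [P [As [Bs [Hf HU]]]] := open_Bas oU Uf.
case: (pselect (exists l : seq X, forall x, x \in l)) => [[l Hl]|Hinf].
  apply: (@cyl_nbhs _ _ l) => g Hg; exists f => //.
  by apply/funext => x; rewrite Hg.
have [h [hinj hT]] := inj_avoid (map snd P ++ Bs) (infinite_of Hinf).
apply: (@cyl_nbhs _ _ (map fst P ++ As)) => g Hg.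
have [g' [Bg' dg']] := dom_fill hinj hT Hf (fun x xF => Hg x xF).
by exists g' => //; apply: HU.
Qed.

Lemma im_open (U : set (Ipp X)) : open U -> open (im (X:=X) @` U).
Proof.
move=> oU; rewrite openE => _ [f Uf <-].
have [P [As [Bs [Hf HU]]]] := open_Bas oU Uf.
case: (pselect (exists l : seq X, forall x, x \in l)) => [[l Hl]|Hinf].
  apply: (@cyl_nbhs _ _ l) => g Hg; exists f => //.
  by apply/funext => x; rewrite Hg.
have [h [hinj hT]] := inj_avoid (map snd (swp P) ++ As) (infinite_of Hinf).
apply: (@cyl_nbhs _ _ (map snd P ++ Bs)) => g Hg.
have Hg' : forall x, x \in map fst (swp P) ++ Bs -> g x = dom (pinvj f) x.
  by move=> x; rewrite map_fst_swp dom_pinv; exact: Hg.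
have [g' [Bg' dg']] := dom_fill hinj hT (Bas_pinvj Hf) Hg'.
exists (pinvj g'); last by rewrite im_pinv.
by apply: HU; have := Bas_pinvj Bg'; rewrite swpK.
Qed.

End Helpers4.


Lemma loc_const_at (T S : topologicalType) (k : T -> S) t (V : set T) :
  open V -> V t -> (forall t', V t' -> k t' = k t) -> {for t, continuous k}.
Proof.
move=> oV Vt HV W /= /nbhs_singleton Wkt.
apply: (@filterS _ _ _ V); last by apply: open_nbhs_nbhs; split.
by move=> t' Vt' /=; rewrite HV.
Qed.

Lemma preimage_top (T S : topologicalType) (k : T -> S) :
  is_topology [set V : set S | open (k @^-1` V)].
Proof.
split => /=; first exact: openT.
  by move=> A B oA oB; rewrite preimage_setI; exact: openI.
by move=> I F oF; rewrite preimage_bigcup; apply: bigcup_open => i _; exact: oF.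
Qed.

Lemma ptws_cont (X : choiceType) (Y : topologicalType) (phi : Y -> {ptws X -> bool}) :
  (forall x, continuous (fun y => phi y x)) -> continuous phi.
Proof.
move=> H y.
have := @pointwise_cvgP (discrete_topology X) bool (phi @ y) (phi y) _.
move=> /(_ _) [_]; apply => t; exact: H.
Qed.

Lemma ptws_compact (X : choiceType) : compact [set: {ptws X -> bool}].
Proof.
have := @tychonoff X (fun _ => bool) (fun _ => setT) (fun _ => bool_compact).
have -> : [set f : forall i : X, bool | forall i, [set: bool] (f i)] = setT.
  by apply/seteqP; split.
exact.
Qed.

Section Main.
Variable X : choiceType.

Lemma dom_cont : continuous (dom (X:=X) : Ipp X -> {ptws X -> bool}).
Proof.
apply: ptws_cont => x f; case E: (pfun f x) => [y|].
  apply: (@loc_const_at (Ipp X) bool _ f (v x y)) => //.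
    by apply: subbase_open; left; exists x, y.
  by move=> f' f'x; rewrite /dom f'x E.
apply: (@loc_const_at (Ipp X) bool _ f (w1 x)) => //.
  by apply: subbase_open; right; left; exists x.
by move=> f' f'x; rewrite /dom f'x E.
Qed.

Lemma im_cont : continuous (im (X:=X) : Ipp X -> {ptws X -> bool}).
Proof.
apply: ptws_cont => y f; case: (pselect (exists x, pfun f x = Some y)) => [[x fx]|nf].
  apply: (@loc_const_at (Ipp X) bool _ f (v x y)) => //.
    by apply: subbase_open; left; exists x, y.
  move=> f' f'x; rewrite /im (asboolT (ex_intro _ x fx)).
  by apply: asboolT; exists x.
apply: (@loc_const_at (Ipp X) bool _ f (w2 y)) => //.
  by apply: subbase_open; right; right; exists y.
move=> f' f'x; rewrite /im (asboolF nf); exact: asboolF.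
Qed.

Lemma ev_cont_at (x : X) (f : Ipp X) : D x f ->
  {for f, continuous (ev x : Ipp X -> discrete_topology X)}.
Proof.
rewrite /D /=; case E: (pfun f x) => [y|] // _.
apply: (@loc_const_at (Ipp X) (discrete_topology X) _ f (v x y)) => //.
  by apply: subbase_open; left; exists x, y.
by move=> f' f'x; rewrite /ev f'x E.
Qed.

Lemma v_eq (x y : X) (U : set (pinj X)) :
  U `&` D x = D x `&` ev x @^-1` [set y] -> v x y = U `&` D x.
Proof.
move=> ->; apply/seteqP; split => f.
  by move=> fx; split; rewrite /D /= ?fx // /ev fx.
rewrite /D /ev /= => -[Df]; case E: (pfun f x) Df => [z|] // _ /= zy.
by rewrite /v /= E zy.
Qed.

End Main.


Section S7.
Variable X : choiceType.

Lemma v_eq2 (x y : X) : v x y = D x `&` ev x @^-1` [set y].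
Proof.
apply/seteqP; split => f.
  by move=> fx; split; rewrite /D /= ?fx // /ev fx.
rewrite /D /ev /= => -[Df]; case E: (pfun f x) Df => [z|] // _ /= zy.
by rewrite /v /= E zy.
Qed.

Definition Fid (g : {ptws X -> bool}) : Ipp X := idA [set x | g x].

Lemma Fid_cont : continuous Fid.
Proof.
apply/continuousP => U oU; apply: (gen_top (preimage_top Fid)) => // s.
case=> [[x [y ->]]|[[x ->]|[y ->]]] /=.
- case: (eqVneq x y) => [<-|nxy].
    have -> : Fid @^-1` v x x = [set g | g x = true] by [apply/seteqP; split => g /=; rewrite /v /Fid /= asboolb; case: (g x)].
    exact: open_coord.
  have -> : Fid @^-1` v x y = set0.
    apply/seteqP; split => g //=; rewrite /v /Fid /= asboolb; case: (g x) => // -[] exy.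
    by rewrite exy eqxx in nxy.
  exact: open0.
- have -> : Fid @^-1` w1 x = [set g | g x = false] by [apply/seteqP; split => g /=; rewrite /w1 /Fid /= asboolb; case: (g x)].
  exact: open_coord.
- have -> : Fid @^-1` w2 y = [set g | g y = false].
    apply/seteqP; split => g /=; rewrite /w2 /Fid /=.
      by move=> H; apply/negbTE/negP => gy; apply: H; exists y; rewrite asboolb gy.
    move=> gy [z]; rewrite asboolb; case E: (g z) => // -[zy].
    by rewrite zy gy in E.
  exact: open_coord.
Qed.

Lemma range_idA : range (fun A : set X => (idA A : Ipp X)) = Fid @` setT.
Proof.
apply/seteqP; split => _ [A _ <-].
  exists (fun x => `[< A x >]) => //; rewrite /Fid; congr idA.
  by apply/seteqP; split => z /= /asboolP.
by exists [set x | A x].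
Qed.

Lemma idA_compact : compact (range (fun A : set X => (idA A : Ipp X))).
Proof.
rewrite range_idA; apply: continuous_compact; last exact: ptws_compact.
apply: continuous_subspaceT; exact: Fid_cont.
Qed.

End S7.

Unset Implicit Arguments.

Theorem theorem3p8 (X : choiceType) :
  (* (i) tau_pp is the smallest topology making dom, im, ev_x continuous *)
  (pp_maps_continuous (@open (Ipp X)) /\
   forall O : set_system (pinj X), is_topology O -> pp_maps_continuous O ->
     forall U : set (pinj X), @open (Ipp X) U -> O U) /\
  (* (ii) dom and im are open maps *)
  (forall U : set (Ipp X), open U ->
     open (dom (X:=X) @` U) /\ open (im (X:=X) @` U)) /\
  (* (iii) universal property *)
  (forall (Y : topologicalType) (phi : Y -> Ipp X),
     continuous phi <->
     [/\ continuous (dom (X:=X) \o phi),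
         continuous (im (X:=X) \o phi) &
         forall x : X, {within phi @^-1` D x,
            continuous ((ev x : pinj X -> discrete_topology X) \o phi)}]) /\
  (* (iv) the idempotents 1_A are compact *)
  compact (range (fun A : set X => (idA A : Ipp X))).
Proof.
have Dx_eq : forall x : X, D x = dom (X:=X) @^-1` [set g | g x = true].
  by move=> x; apply/seteqP; split => f /=; rewrite /D /dom /=; case: (pfun f x).
have w1_eq : forall x : X, w1 x = dom (X:=X) @^-1` [set g | g x = false].
  by move=> x; apply/seteqP; split => f /=; rewrite /w1 /dom /=; case: (pfun f x).
have w2_eq : forall y : X, w2 y = im (X:=X) @^-1` [set g | g y = false].
  move=> y; apply/seteqP; split => f /=; rewrite /w2 /im /=.
    by move=> H; exact: asboolF.
  by move=> H Hex; move: H; rewrite asboolT.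
split; [split|split; [|split]].
- split.
  + by move=> V oV; have /continuousP := @dom_cont X; apply.
  + by move=> V oV; have /continuousP := @im_cont X; apply.
  + move=> x V oV; exists (\bigcup_(y in V) v x y); split.
      by apply: bigcup_open => y _; apply: subbase_open; left; exists x, y.
    apply/seteqP; split => f.
      by move=> [[y Vy fxy] Df]; split => //; rewrite /ev /= fxy.
    rewrite /D /ev /= => -[Df]; case E: (pfun f x) Df => [y|] // _ /= Vy.
    by split; [exists y|].
- move=> O Otop [Odom Oim Oev]; apply: gen_top => // s.
  have ODx : forall x, O (D x) by move=> x; rewrite Dx_eq; apply: Odom; exact: open_coord.
  case=> [[x [y ->]]|[[x ->]|[y ->]]].
  + have [U [OU HU]] := Oev x [set y] (discrete_open _).
    rewrite (v_eq HU); case: Otop => _ OI _; exact: OI.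
  + by rewrite w1_eq; apply: Odom; exact: open_coord.
  + by rewrite w2_eq; apply: Oim; exact: open_coord.
- by move=> U oU; split; [exact: dom_open|exact: im_open].
- move=> Y phi; split.
  + move=> cphi; split.
    * move=> y; apply: continuous_comp; [exact: cphi|exact: dom_cont].
    * move=> y; apply: continuous_comp; [exact: cphi|exact: im_cont].
    * move=> x; apply: continuous_in_subspaceT => y; rewrite in_setE => Ay.
      apply: continuous_comp; [exact: cphi|exact: ev_cont_at].
  + move=> [cd ci ce]; apply/continuousP => U oU.
    apply: (gen_top (preimage_top phi)) => // s.
    case=> [[x [y ->]]|[[x ->]|[y ->]]] /=.
    * have oA : open (phi @^-1` D x).
        by rewrite Dx_eq; have /continuousP := cd; apply; exact: open_coord.
      have cin : {in phi @^-1` D x, continuous ((ev x : pinj X -> discrete_topology X) \o phi)}.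
        by rewrite -continuous_open_subspace //; exact: ce.
      have := proj1 (continuous_inP _ oA) cin [set y] (discrete_open _).
      by rewrite v_eq2 preimage_setI.
    * by rewrite w1_eq; have /continuousP := cd; apply; exact: open_coord.
    * by rewrite w2_eq; have /continuousP := ci; apply; exact: open_coord.
- exact: idA_compact.
Qed.
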